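(* Let $\omega$ be a primitive third root of unity, $S=\mathbb{C}\langle x,y,z\rangle/(x^2,y^2,z^2)$, and for $[A:B]\in\mathbb{P}^1$ let $T_{[A:B]}$ be the quotient of $S$ by the two-sided ideal generated by $$A(zxy+\omega xyz+\omega^2 yzx)+B(yxz+\omega zyx+\omega^2 xzy),\qquad A(zxy+\omega^2 xyz+\omega yzx)+B(yxz+\omega^2 zyx+\omega xzy).$$ Let the Heisenberg group $H_3$ act on $T_{[A:B]}$ by the graded automorphisms determined by $e_1\cdot x=z,\ e_1\cdot y=x,\ e_1\cdot z=y$ and $e_2\cdot x=x,\ e_2\cdot y=\omega y,\ e_2\cdot z=\omega^2 z$. Then for every $[A:B]\in\mathbb{P}^1$ there exists a nonzero central element of degree 3 in $T_{[A:B]}$ which is fixed by $H_3$.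
   Context: $H_3=\langle e_1,e_2\mid [e_1,e_2]\text{ central},\ e_1^3=e_2^3=1\rangle$ is the Heisenberg group of order 27. The given action preserves the defining ideal, so it induces an action on $T_{[A:B]}$. In the paper the parametrization is written via $t=B/A\in\mathbb{P}^1$ (points of the diagonal $\Delta\subset\mathbb{P}^1\times\mathbb{P}^1$). *)

(* Defs.v *)
(* Noncommutative polynomials in three variables x,y,z
   (letters 0,1,2 of 'I_3) over a commutative ring K are represented as
   formal finite sums: lists of (coefficient, word). Two formal sums are
   equal as elements of K<x,y,z> iff their coefficient functions agree. *)
From HB Require Import structures.
From mathcomp Require Import all_boot all_order all_algebra.
From mathcomp Require Export complex.
From mathcomp Require Export reals.
Set Implicit Arguments. Unset Strict Implicit. Unset Printing Implicit Defensive.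
Import Order.TTheory GRing.Theory Num.Theory.
Local Open Scope ring_scope.

Definition word := seq 'I_3.
Definition ncpoly (K : Type) := seq (K * word).

Section NC.
Variable K : comNzRingType.

Definition ncoef (p : ncpoly K) (w : word) : K :=
  \sum_(t <- p | t.2 == w) t.1.

Definition nceq (p q : ncpoly K) : Prop := forall w, ncoef p w = ncoef q w.

Definition ncadd (p q : ncpoly K) : ncpoly K := p ++ q.
Definition ncscale (c : K) (p : ncpoly K) : ncpoly K :=
  [seq (c * t.1, t.2) | t <- p].
Definition ncsub (p q : ncpoly K) : ncpoly K := ncadd p (ncscale (-1) q).
Definition ncmul (p q : ncpoly K) : ncpoly K :=
  [seq (a.1 * b.1, a.2 ++ b.2) | a <- p, b <- q].
Definition ncmon (c : K) (w : word) : ncpoly K := [:: (c, w)].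

Definition nchomog (n : nat) (p : ncpoly K) : bool := all (fun t => size t.2 == n) p.

(* membership in the two-sided ideal generated by the list rels:
   p equals a finite sum of terms  c * u * r * v  with r in rels,
   u, v words (this is the ideal generated, since K<x,y,z> is spanned
   by words). *)
Definition in_ideal (rels : seq (ncpoly K)) (p : ncpoly K) : Prop :=
  exists l : seq (K * word * ncpoly K * word),
    all (fun t => t.1.2 \in rels) l /\
    nceq p (flatten [seq ncmul (ncmul (ncmon t.1.1.1 t.1.1.2) t.1.2) (ncmon 1 t.2)
                    | t <- l]).

Definition e1_letter (i : 'I_3) : 'I_3 :=
  if val i == 0%N then inord 2 else if val i == 1%N then inord 0 else inord 1.
Definition act_e1 (p : ncpoly K) : ncpoly K := [seq (t.1, map e1_letter t.2) | t <- p].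
Definition act_e2 (om : K) (p : ncpoly K) : ncpoly K :=
  [seq (t.1 * \prod_(i <- t.2) om ^+ val i, t.2) | t <- p].

(* action of a word in the generators e1 (true) and e2 (false);
   the word [:: g1; ...; gk] acts as g1 . g2 . ... . gk *)
Fixpoint act_gens (om : K) (s : seq bool) (p : ncpoly K) : ncpoly K :=
  match s with
  | [::] => p
  | g :: s' => (if g then act_e1 else act_e2 om) (act_gens om s' p)
  end.

Definition X : word := [:: inord 0].
Definition Y : word := [:: inord 1].
Definition Z : word := [:: inord 2].

Definition T_rels (om A B : K) : seq (ncpoly K) :=
  [:: ncmon 1 (X ++ X); ncmon 1 (Y ++ Y); ncmon 1 (Z ++ Z);
      [:: (A, Z ++ X ++ Y); (A * om, X ++ Y ++ Z); (A * om ^+ 2, Y ++ Z ++ X);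
          (B, Y ++ X ++ Z); (B * om, Z ++ Y ++ X); (B * om ^+ 2, X ++ Z ++ Y)];
      [:: (A, Z ++ X ++ Y); (A * om ^+ 2, X ++ Y ++ Z); (A * om, Y ++ Z ++ X);
          (B, Y ++ X ++ Z); (B * om ^+ 2, Z ++ Y ++ X); (B * om, X ++ Z ++ Y)]].

End NC.

(* Main.v *)
Require Import Defs.
From HB Require Import structures.
From mathcomp Require Import all_boot all_order all_algebra.
From mathcomp Require Import complex reals.
From mathcomp Require Import ring zify.
From Stdlib Require Import Classical.
Set Implicit Arguments. Unset Strict Implicit. Unset Printing Implicit Defensive.
Import GRing.Theory Num.Theory.
Local Open Scope ring_scope.
Section Infra.
Variable K : comNzRingType.
Implicit Types p q : ncpoly K.

Lemma ncoefE p w : ncoef p w = \sum_(t <- p) t.1 * (t.2 == w)%:R.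
Proof.
rewrite /ncoef big_mkcond /=; apply: eq_bigr => t _.
by case: (t.2 == w); rewrite ?mulr1 ?mulr0.
Qed.

Lemma ncoef_nil w : ncoef [::] w = 0 :> K.
Proof. by rewrite /ncoef big_nil. Qed.

Lemma ncoef_cons t p w : ncoef (t :: p) w = t.1 * (t.2 == w)%:R + ncoef p w.
Proof. by rewrite !ncoefE big_cons. Qed.

Lemma ncoef_cat p q w : ncoef (p ++ q) w = ncoef p w + ncoef q w.
Proof. by rewrite /ncoef big_cat. Qed.

Lemma ncoef_scale c p w : ncoef (ncscale c p) w = c * ncoef p w.
Proof. by rewrite !ncoefE big_map big_distrr; apply: eq_bigr => t _ /=; rewrite mulrA. Qed.

Lemma ncoef_sub p q w : ncoef (ncsub p q) w = ncoef p w - ncoef q w.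
Proof. by rewrite /ncsub /ncadd ncoef_cat ncoef_scale mulN1r. Qed.

Lemma ncoef_flatten (ss : seq (ncpoly K)) w :
  ncoef (flatten ss) w = \sum_(s <- ss) ncoef s w.
Proof. by rewrite /ncoef big_flatten. Qed.

Lemma ncoef_mapw (g : word -> word) p w :
  ncoef [seq (t.1, g t.2) | t <- p] w = \sum_(t <- p) t.1 * (g t.2 == w)%:R.
Proof. by rewrite ncoefE big_map. Qed.

Lemma ncoef_mul p q w : ncoef (ncmul p q) w =
  \sum_(a <- p) \sum_(b <- q) a.1 * b.1 * (a.2 ++ b.2 == w)%:R.
Proof. by rewrite ncoefE /ncmul big_allpairs_dep. Qed.

Definition gen (t : K * word * ncpoly K * word) :=
  ncmul (ncmul (ncmon t.1.1.1 t.1.1.2) t.1.2) (ncmon 1 t.2).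
Definition flat (l : seq (K * word * ncpoly K * word)) := flatten [seq gen t | t <- l].

Lemma gen_eq (c : K) (u : word) (r : ncpoly K) (v : word) : ncmul (ncmul (ncmon c u) r) (ncmon 1 v) = [seq (c * b.1 * 1, (u ++ b.2) ++ v) | b <- r].
Proof. by rewrite /ncmul /ncmon /= cats0; elim: r => //= b r ->. Qed.

Variable rels : seq (ncpoly K).
Definition I p := in_ideal rels p.

Lemma I_nceq p q : nceq p q -> I p -> I q.
Proof. by move=> pq [l [Hl Hp]]; exists l; split => // w; rewrite -pq Hp. Qed.

Lemma I_zero p : (forall w, ncoef p w = 0) -> I p.
Proof. by move=> H; exists [::]; split => // w; rewrite H ncoef_nil. Qed.

Lemma I_cat p q : I p -> I q -> I (p ++ q).
Proof.
move=> [l1 [H1 E1]] [l2 [H2 E2]]; exists (l1 ++ l2); split.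
  by rewrite all_cat H1 H2.
by move=> w; rewrite map_cat flatten_cat !ncoef_cat E1 E2.
Qed.

Lemma I_flatten (ss : seq (ncpoly K)) : foldr (fun s P => I s /\ P) True ss -> I (flatten ss).
Proof.
elim: ss => [_|s ss IH /= [Hs Hss]]; first by apply: I_zero => w; rewrite ncoef_nil.
by apply: I_cat => //; apply: IH.
Qed.

Lemma I_scale c p : I p -> I (ncscale c p).
Proof.
move=> [l [Hl E]].
exists [seq (c * t.1.1.1, t.1.1.2, t.1.2, t.2) | t <- l]; split.
  by rewrite all_map; apply: sub_all Hl => t.
move=> w; rewrite ncoef_scale E -ncoef_scale; congr ncoef.
rewrite /ncscale /flat map_flatten -!map_comp; congr flatten; apply: eq_map.
case=> [[[c0 u] r] v]; rewrite /comp /= !gen_eq -map_comp; apply: eq_map => b /=.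
by rewrite !mulrA.
Qed.

Lemma nceq_map (g : word -> word) p q : injective g -> nceq p q ->
  nceq [seq (t.1, g t.2) | t <- p] [seq (t.1, g t.2) | t <- q].
Proof.
move=> ig E w; rewrite /ncoef !big_map /=.
case: (classic (exists s, g s = w)) => [[s <-]|N].
  rewrite (eq_bigl (fun t => t.2 == s)); last by move=> t; rewrite inj_eq.
  rewrite [RHS](eq_bigl (fun t => t.2 == s)); last by move=> t; rewrite inj_eq.
  exact: E.
rewrite !big1 // => t /eqP H; case: N; by exists t.2.
Qed.

Definition lm (a : word) p := [seq (t.1, a ++ t.2) | t <- p].
Definition rm (b : word) p := [seq (t.1, t.2 ++ b) | t <- p].

Lemma catI (a : word) : injective (cat a).
Proof. by move=> s t /eqP; rewrite eqseq_cat // => /andP [_ /eqP]. Qed.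

Lemma catIr (b : word) : injective (cat^~ b).
Proof.
move=> s t E; have Hs : size s = size t.
  by move: (congr1 size E); rewrite !size_cat => /addIn.
by move/eqP: E; rewrite eqseq_cat // => /andP [/eqP].
Qed.

Lemma I_lm a p : I p -> I (lm a p).
Proof.
move=> [l [Hl E]].
exists [seq (t.1.1.1, a ++ t.1.1.2, t.1.2, t.2) | t <- l]; split.
  by rewrite all_map; apply: sub_all Hl => t.
move=> w; rewrite (nceq_map (@catI a) E); congr ncoef.
rewrite /flat map_flatten -!map_comp; congr flatten; apply: eq_map.
case=> [[[c0 u] r] v]; rewrite /comp /= !gen_eq -map_comp; apply: eq_map => b /=.
by rewrite !catA.
Qed.

Lemma I_rm a p : I p -> I (rm a p).
Proof.
move=> [l [Hl E]].
exists [seq (t.1.1.1, t.1.1.2, t.1.2, t.2 ++ a) | t <- l]; split.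
  by rewrite all_map; apply: sub_all Hl => t.
move=> w; rewrite (nceq_map (@catIr a) E); congr ncoef.
rewrite /flat map_flatten -!map_comp; congr flatten; apply: eq_map.
case=> [[[c0 u] r] v]; rewrite /comp /= !gen_eq -map_comp; apply: eq_map => b /=.
by rewrite !catA.
Qed.

Variable f : ncpoly K.
Definition D u := ncsub (lm u f) (rm u f).

Lemma comm_reduce q : nceq (ncsub (ncmul q f) (ncmul f q))
   (flatten [seq ncscale t.1 (D t.2) | t <- q]).
Proof.
move=> w; rewrite ncoef_sub ncoef_flatten !ncoef_mul big_map.
rewrite [X in _ - X]exchange_big /= -sumrB; apply: eq_bigr => t _.
rewrite ncoef_scale ncoef_sub /lm /rm !ncoef_mapw (ncoef_mapw (cat^~ t.2)).
rewrite mulrBr !big_distrr /=; congr (_ - _); apply: eq_bigr => b _.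
  by rewrite mulrA.
by rewrite mulrA [b.1 * t.1]mulrC.
Qed.

Lemma D_cons a u : nceq (D (a :: u)) (lm [:: a] (D u) ++ rm u (D [:: a])).
Proof.
move=> w; rewrite ncoef_cat /D /lm /rm /ncsub /ncadd /ncscale !map_cat -!map_comp.
rewrite !ncoef_cat !ncoefE !big_map -!big_split; apply: eq_bigr => t _ /=; rewrite -!catA /=; ring. Qed.

Lemma D_nil w : ncoef (D [::]) w = 0.
Proof.
rewrite /D ncoef_sub /lm /rm !ncoef_mapw (ncoef_mapw (cat^~ [::])); apply/eqP; rewrite subr_eq0; apply/eqP; apply: eq_bigr => t _.
by rewrite cats0.
Qed.

Lemma central_of_letters : (forall a : 'I_3, I (D [:: a])) ->
  forall q, I (ncsub (ncmul q f) (ncmul f q)).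
Proof.
move=> Ha q; apply: I_nceq (fun w => esym (comm_reduce q w)) _.
apply: I_flatten; elim: q => //= t q IH; split => //; apply: I_scale.
elim: t.2 => [|a u IHu]; first by apply: I_zero; exact: D_nil.
apply: I_nceq (fun w => esym (D_cons a u w)) _.
by apply: I_cat; [apply: I_lm | apply: I_rm].
Qed.

End Infra.
Section Cert.
Variable K : comNzRingType.
Definition sq0 : ncpoly K := ncmon 1 (X ++ X).
Definition sq1 : ncpoly K := ncmon 1 (Y ++ Y).
Definition sq2 : ncpoly K := ncmon 1 (Z ++ Z).
Definition rel1 (om A B : K) : ncpoly K :=
      [:: (A, Z ++ X ++ Y); (A * om, X ++ Y ++ Z); (A * om ^+ 2, Y ++ Z ++ X);
          (B, Y ++ X ++ Z); (B * om, Z ++ Y ++ X); (B * om ^+ 2, X ++ Z ++ Y)].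
Definition rel2 (om A B : K) : ncpoly K :=
      [:: (A, Z ++ X ++ Y); (A * om ^+ 2, X ++ Y ++ Z); (A * om, Y ++ Z ++ X);
          (B, Y ++ X ++ Z); (B * om ^+ 2, Z ++ Y ++ X); (B * om, X ++ Z ++ Y)].
Definition fpoly (A B : K) : ncpoly K :=
  [:: (2 * A, X ++ Y ++ Z); (2 * A, Y ++ Z ++ X); (2 * A, Z ++ X ++ Y);
      (2 * B, X ++ Z ++ Y); (2 * B, Z ++ Y ++ X); (2 * B, Y ++ X ++ Z)].

Lemma T_relsE om A B : T_rels om A B = [:: sq0; sq1; sq2; rel1 om A B; rel2 om A B].
Proof. by []. Qed.

Lemma mem_sq0 om A B : sq0 \in T_rels om A B. Proof. by rewrite T_relsE !inE eqxx. Qed.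
Lemma mem_sq1 om A B : sq1 \in T_rels om A B. Proof. by rewrite T_relsE !inE eqxx !orbT. Qed.
Lemma mem_sq2 om A B : sq2 \in T_rels om A B. Proof. by rewrite T_relsE !inE eqxx !orbT. Qed.
Lemma mem_rel1 om A B : rel1 om A B \in T_rels om A B. Proof. by rewrite T_relsE !inE eqxx !orbT. Qed.
Lemma mem_rel2 om A B : rel2 om A B \in T_rels om A B. Proof. by rewrite T_relsE !inE eqxx !orbT. Qed.

Definition cert_x (om A B : K) : seq (K * word * ncpoly K * word) :=
  [:: (1, X, rel1 om A B, [::]);
  (-(1), [::], rel1 om A B, X);
  (1, X, rel2 om A B, [::]);
  (-(1), [::], rel2 om A B, X);
  (2 * A, [::], sq0, Y ++ Z);
  (-1 * (2 * A), Y ++ Z, sq0, [::]);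
  (2 * B, [::], sq0, Z ++ Y);
  (-1 * (2 * B), Z ++ Y, sq0, [::]);
  (- (1 * (A * om) * 1), [::], sq0, Y ++ Z);
  (- (-(1) * (A * om ^+ 2) * 1), Y ++ Z, sq0, [::]);
  (- (-(1) * (B * om) * 1), Z ++ Y, sq0, [::]);
  (- (1 * (B * om ^+ 2) * 1), [::], sq0, Z ++ Y);
  (- (1 * (A * om ^+ 2) * 1), [::], sq0, Y ++ Z);
  (- (-(1) * (A * om) * 1), Y ++ Z, sq0, [::]);
  (- (-(1) * (B * om ^+ 2) * 1), Z ++ Y, sq0, [::]);
  (- (1 * (B * om) * 1), [::], sq0, Z ++ Y)].

Definition cert_y (om A B : K) : seq (K * word * ncpoly K * word) :=
  [:: (om ^+ 2, Y, rel1 om A B, [::]);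
  (-(om ^+ 2), [::], rel1 om A B, Y);
  (om, Y, rel2 om A B, [::]);
  (-(om), [::], rel2 om A B, Y);
  (2 * A, [::], sq1, Z ++ X);
  (-1 * (2 * A), Z ++ X, sq1, [::]);
  (-1 * (2 * B), X ++ Z, sq1, [::]);
  (2 * B, [::], sq1, X ++ Z);
  (- (-(om ^+ 2) * (A) * 1), Z ++ X, sq1, [::]);
  (- (om ^+ 2 * (A * om ^+ 2) * 1), [::], sq1, Z ++ X);
  (- (om ^+ 2 * (B) * 1), [::], sq1, X ++ Z);
  (- (-(om ^+ 2) * (B * om ^+ 2) * 1), X ++ Z, sq1, [::]);
  (- (-(om) * (A) * 1), Z ++ X, sq1, [::]);
  (- (om * (A * om) * 1), [::], sq1, Z ++ X);
  (- (om * (B) * 1), [::], sq1, X ++ Z);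
  (- (-(om) * (B * om) * 1), X ++ Z, sq1, [::])].

Definition cert_z (om A B : K) : seq (K * word * ncpoly K * word) :=
  [:: (om, Z, rel1 om A B, [::]);
  (-(om), [::], rel1 om A B, Z);
  (om ^+ 2, Z, rel2 om A B, [::]);
  (-(om ^+ 2), [::], rel2 om A B, Z);
  (-1 * (2 * A), X ++ Y, sq2, [::]);
  (2 * A, [::], sq2, X ++ Y);
  (2 * B, [::], sq2, Y ++ X);
  (-1 * (2 * B), Y ++ X, sq2, [::]);
  (- (om * (A) * 1), [::], sq2, X ++ Y);
  (- (-(om) * (A * om) * 1), X ++ Y, sq2, [::]);
  (- (-(om) * (B) * 1), Y ++ X, sq2, [::]);
  (- (om * (B * om) * 1), [::], sq2, Y ++ X);
  (- (om ^+ 2 * (A) * 1), [::], sq2, X ++ Y);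
  (- (-(om ^+ 2) * (A * om ^+ 2) * 1), X ++ Y, sq2, [::]);
  (- (-(om ^+ 2) * (B) * 1), Y ++ X, sq2, [::]);
  (- (om ^+ 2 * (B * om ^+ 2) * 1), [::], sq2, Y ++ X)].

Variables (om A B : K).
Hypothesis Hom : om ^+ 2 = -1 - om.

Lemma cx : in_ideal (T_rels om A B) (D (fpoly A B) X).
Proof.
exists (cert_x om A B); split.
  by rewrite /= ?mem_sq0 ?mem_sq1 ?mem_sq2 ?mem_rel1 ?mem_rel2.
move=> w; rewrite /D /lm /rm /ncsub /ncadd /ncscale /cert_x /rel1 /rel2 /sq0 /sq1 /sq2 /fpoly.
rewrite /X /Y /Z /= !ncoef_cons ncoef_nil /=.
ring: Hom.
Qed.
Lemma cy : in_ideal (T_rels om A B) (D (fpoly A B) Y).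
Proof.
exists (cert_y om A B); split.
  by rewrite /= ?mem_sq0 ?mem_sq1 ?mem_sq2 ?mem_rel1 ?mem_rel2.
move=> w; rewrite /D /lm /rm /ncsub /ncadd /ncscale /cert_y /rel1 /rel2 /sq0 /sq1 /sq2 /fpoly.
rewrite /X /Y /Z /= !ncoef_cons ncoef_nil /=.
ring: Hom.
Qed.
Lemma cz : in_ideal (T_rels om A B) (D (fpoly A B) Z).
Proof.
exists (cert_z om A B); split.
  by rewrite /= ?mem_sq0 ?mem_sq1 ?mem_sq2 ?mem_rel1 ?mem_rel2.
move=> w; rewrite /D /lm /rm /ncsub /ncadd /ncscale /cert_z /rel1 /rel2 /sq0 /sq1 /sq2 /fpoly.
rewrite /X /Y /Z /= !ncoef_cons ncoef_nil /=.
ring: Hom.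
Qed.

Lemma letters (a : 'I_3) : in_ideal (T_rels om A B) (D (fpoly A B) [:: a]).
Proof.
case: a => m Hm; case: m Hm => [|[|[|m]]] Hm //.
- have -> : Ordinal Hm = inord 0 by apply: val_inj; rewrite /= inordK.
  exact: cx.
- have -> : Ordinal Hm = inord 1 by apply: val_inj; rewrite /= inordK.
  exact: cy.
- have -> : Ordinal Hm = inord 2 by apply: val_inj; rewrite /= inordK.
  exact: cz.
Qed.

Lemma central q : in_ideal (T_rels om A B)
   (ncsub (ncmul q (fpoly A B)) (ncmul (fpoly A B) q)).
Proof. exact: (central_of_letters letters). Qed.

Lemma eqI3 i j : (i < 3)%N -> (j < 3)%N -> (inord i == inord j :> 'I_3) = (i == j).
Proof. by move=> Hi Hj; rewrite -(inj_eq val_inj) /= !inordK. Qed.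

Lemma e1_inj : injective e1_letter.
Proof.
move=> [[|[|[|?]]] Hi] [[|[|[|?]]] Hj] // E; apply: val_inj => //=;
  by move/eqP: E; rewrite /e1_letter /= eqI3.
Qed.

Lemma nceq_e1 (p q : ncpoly K) : nceq p q -> nceq (act_e1 p) (act_e1 q).
Proof. by apply: nceq_map; apply: inj_map; exact: e1_inj. Qed.

Lemma ncoef_e2 (p : ncpoly K) w : ncoef (act_e2 om p) w = ncoef p w * \prod_(i <- w) om ^+ val i.
Proof. by rewrite /ncoef big_map big_distrl /=; apply: eq_bigr => t /eqP ->. Qed.

Lemma nceq_e2 (p q : ncpoly K) : nceq p q -> nceq (act_e2 om p) (act_e2 om q).
Proof. by move=> E w; rewrite !ncoef_e2 E. Qed.

Lemma e1_0 : e1_letter (inord 0) = inord 2. Proof. by rewrite /e1_letter /= inordK. Qed.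
Lemma e1_1 : e1_letter (inord 1) = inord 0. Proof. by rewrite /e1_letter /= inordK. Qed.
Lemma e1_2 : e1_letter (inord 2) = inord 1. Proof. by rewrite /e1_letter /= inordK. Qed.

Lemma f_e1 : nceq (act_e1 (fpoly A B)) (fpoly A B).
Proof.
move=> w; rewrite /act_e1 /fpoly /X /Y /Z /= !e1_0 !e1_1 !e1_2 !ncoef_cons ncoef_nil /=.
ring.
Qed.

Lemma f_e2 : nceq (act_e2 om (fpoly A B)) (fpoly A B).
Proof.
move=> w; rewrite /act_e2 /fpoly /X /Y /Z /= !ncoef_cons ncoef_nil /= !big_cons big_nil !inordK //.
ring: Hom.
Qed.

Lemma invariant s : in_ideal (T_rels om A B) (ncsub (act_gens om s (fpoly A B)) (fpoly A B)).
Proof.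
have H : nceq (act_gens om s (fpoly A B)) (fpoly A B).
  elim: s => [//|g s IH] /=; case: g.
    by move=> w; rewrite (nceq_e1 IH) f_e1.
  by move=> w; rewrite (nceq_e2 IH) f_e2.
by apply: I_zero => w; rewrite ncoef_sub H subrr.
Qed.

Fixpoint sqf (w : word) : bool :=
  match w with a :: ((b :: _) as t) => (a != b) && sqf t | _ => true end.

Lemma sqf_sq (u : word) l (v : word) : sqf ((u ++ [:: l; l]) ++ v) = false.
Proof.
rewrite -catA /=; elim: u => [|a u IH] /=; first by rewrite eqxx.
by case: u IH => [|b u] /= IH; rewrite IH andbF.
Qed.

Definition lam (S : seq word) (p : ncpoly K) := \sum_(w <- S) ncoef p w.

Lemma lam_sq (S : seq word) (HS : all (fun w => (size w == 3) && sqf w) S)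
  (c : K) u v l :
  lam S [seq (c * b.1 * 1, (u ++ b.2) ++ v) | b <- ncmon 1 [:: l; l]] = 0.
Proof.
rewrite /lam big1_seq // => w /andP [_ Hw]; rewrite /ncmon /= ncoef_cons ncoef_nil.
have -> : ((u ++ [:: l; l]) ++ v == w) = false.
  apply/negbTE/negP => /eqP E; move/allP: HS => /(_ _ Hw) /andP [_].
  by rewrite -E sqf_sq.
by rewrite mulr0 addr0.
Qed.

Lemma lam_rel (S : seq word) (HS : all (fun w => (size w == 3) && sqf w) S)
  (r : ncpoly K) (Hr : all (fun b => size b.2 == 3) r) (H : lam S r = 0) (c : K) u v :
  lam S [seq (c * b.1 * 1, (u ++ b.2) ++ v) | b <- r] = 0.
Proof.
case: u => [|a u]; first case: v => [|a v].
- rewrite -[RHS](mulr0 c) -H /lam big_distrr; apply: eq_bigr => w _.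
  rewrite !ncoefE big_map big_distrr; apply: eq_bigr => b _ /=.
  by rewrite cats0 mulr1 mulrA.
- rewrite /lam big1_seq // => w /andP [_ Hw]; rewrite ncoefE big_map big1_seq //.
  move=> b /andP [_ Hb] /=; move/allP: HS => /(_ _ Hw) /andP [/eqP Sw _].
  move/allP: Hr => /(_ _ Hb) /eqP Sb.
  have -> : ((b.2 ++ a :: v) == w) = false.
    apply/negbTE/negP => /eqP E; move: (congr1 size E).
    rewrite Sw size_cat Sb /=; lia.
  by rewrite mulr0.
- rewrite /lam big1_seq // => w /andP [_ Hw]; rewrite ncoefE big_map big1_seq //.
  move=> b /andP [_ Hb] /=; move/allP: HS => /(_ _ Hw) /andP [/eqP Sw _].
  move/allP: Hr => /(_ _ Hb) /eqP Sb.
  have -> : (a :: (u ++ b.2) ++ v == w) = false.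
    apply/negbTE/negP => /eqP E; move: (congr1 size E).
    rewrite Sw /= !size_cat Sb; lia.
  by rewrite mulr0.
Qed.

Lemma lam_zero (S : seq word) (HS : all (fun w => (size w == 3) && sqf w) S)
  (H1 : lam S (rel1 om A B) = 0) (H2 : lam S (rel2 om A B) = 0)
  (l : seq (K * word * ncpoly K * word)) :
  all (fun t => t.1.2 \in T_rels om A B) l ->
  lam S (flatten [seq ncmul (ncmul (ncmon t.1.1.1 t.1.1.2) t.1.2) (ncmon 1 t.2) | t <- l]) = 0.
Proof.
move=> Hl; rewrite /lam.
under eq_bigr => w _ do rewrite ncoef_flatten big_map.
rewrite exchange_big big1_seq // => -[[[c u] r] v] /andP [_ Ht].
move/allP: Hl => /(_ _ Ht) /= Hr; rewrite gen_eq.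
move: Hr; rewrite T_relsE !inE.
case/orP => [/eqP ->|]; first exact: lam_sq.
case/orP => [/eqP ->|]; first exact: lam_sq.
case/orP => [/eqP ->|]; first exact: lam_sq.
case/orP => /eqP ->; exact: lam_rel.
Qed.

Definition SA : seq word := [:: X ++ Y ++ Z; Y ++ Z ++ X; Z ++ X ++ Y].
Definition SB : seq word := [:: X ++ Z ++ Y; Z ++ Y ++ X; Y ++ X ++ Z].

Lemma SA_ok : all (fun w => (size w == 3) && sqf w) SA.
Proof. by rewrite /SA /X /Y /Z /= !eqI3. Qed.
Lemma SB_ok : all (fun w => (size w == 3) && sqf w) SB.
Proof. by rewrite /SB /X /Y /Z /= !eqI3. Qed.

Ltac lamcomp := rewrite /lam /SA /SB /rel1 /rel2 /fpoly /X /Y /Z !big_cons big_nil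
   !ncoef_cons !ncoef_nil /= !eqseq_cons !eqI3 //=.

Lemma SA_r1 : lam SA (rel1 om A B) = 0. Proof. lamcomp. ring: Hom. Qed.
Lemma SA_r2 : lam SA (rel2 om A B) = 0. Proof. lamcomp. ring: Hom. Qed.
Lemma SB_r1 : lam SB (rel1 om A B) = 0. Proof. lamcomp. ring: Hom. Qed.
Lemma SB_r2 : lam SB (rel2 om A B) = 0. Proof. lamcomp. ring: Hom. Qed.
Lemma SA_f : lam SA (fpoly A B) = 6 * A. Proof. lamcomp. ring. Qed.
Lemma SB_f : lam SB (fpoly A B) = 6 * B. Proof. lamcomp. ring. Qed.

Lemma nonmem : in_ideal (T_rels om A B) (fpoly A B) -> 6 * A = 0 /\ 6 * B = 0.
Proof.
move=> [l [Hl E]]; split.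
  rewrite -SA_f -(lam_zero SA_ok SA_r1 SA_r2 Hl); apply: eq_bigr => w _; exact: E.
rewrite -SB_f -(lam_zero SB_ok SB_r1 SB_r2 Hl); apply: eq_bigr => w _; exact: E.
Qed.
End Cert.

Unset Implicit Arguments.

Lemma om_rel (R : realType) (om : R[i]) : 3.-primitive_root om -> om ^+ 2 = -1 - om.
Proof.
move=> Hp; have h3 : om ^+ 3 = 1 := prim_expr_order Hp.
have h1 : (om ^+ 1 == 1) = false by rewrite -(prim_order_dvd Hp).
have E : (om - 1) * (om ^+ 2 + om + 1) = om ^+ 3 - 1 by ring.
have : (om - 1) * (om ^+ 2 + om + 1) = 0 by rewrite E h3 subrr.
move/eqP; rewrite mulf_eq0 subr_eq0; move: h1; rewrite expr1 => -> /= /eqP H.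
by rewrite -[LHS]subr0 -H; ring.
Qed.

Theorem mainTheorem2 (R : realType) (om : R[i]) (A B : R[i]) :
  3.-primitive_root om ->
  ~ (A = 0 /\ B = 0) ->
  exists f : ncpoly R[i],
    [/\ nchomog 3 f,
        ~ in_ideal (T_rels om A B) f,
        (forall q : ncpoly R[i],
            in_ideal (T_rels om A B) (ncsub (ncmul q f) (ncmul f q))) &
        (forall s : seq bool,
            in_ideal (T_rels om A B) (ncsub (act_gens om s f) f))].
Proof.
move=> Hp HAB; have Hom := @om_rel R om Hp.
exists (fpoly A B); split.
- by [].
- move=> /(nonmem Hom) [HA HB]; apply: HAB.
  have H6 : (6 : R[i]) != 0 by rewrite pnatr_eq0.
  by split; apply/eqP; [move/eqP: HA | move/eqP: HB]; rewrite mulf_eq0 (negbTE H6).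
- exact: central Hom.
- exact: invariant Hom.
Qed.
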